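(* Let $R$ be a $\star$-ring and $e\in P(R)$. If $a\in eRe$ is strongly $\star$-clean in the corner ring $eRe$, then $a$ is strongly $\star$-clean in $R$.
   Context: Rings are associative with identity. A $\star$-ring is a ring with a map $\star$ satisfying $(x+y)^\star=x^\star+y^\star$, $(xy)^\star=y^\star x^\star$, $(x^\star)^\star=x$. A projection is $p$ with $p^2=p=p^\star$; $P(R)$ is the set of projections, $U(R)$ the units. For $e\in P(R)$, $eRe$ is a $\star$-ring with identity $e$ and the restricted involution. An element $x$ of a $\star$-ring $S$ is strongly $\star$-clean if $x=u+p$ with $u\in U(S)$, $p\in P(S)$ and $up=pu$. *)

(* Defs.v *)
From mathcomp Require Import all_boot all_algebra.
Set Implicit Arguments. Unset Strict Implicit. Unset Printing Implicit Defensive.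
Import GRing.Theory.
Local Open Scope ring_scope.

Definition is_involution (R : pzRingType) (star : R -> R) : Prop :=
  [/\ forall x y, star (x + y) = star x + star y,
      forall x y, star (x * y) = star y * star x &
      forall x, star (star x) = x].

Definition is_projection (R : pzRingType) (star : R -> R) (p : R) : Prop :=
  p * p = p /\ p = star p.

Definition in_corner (R : pzRingType) (e x : R) : Prop :=
  exists r : R, x = e * r * e.

Definition corner_unit (R : pzRingType) (e u : R) : Prop :=
  in_corner e u /\ exists v, in_corner e v /\ u * v = e /\ v * u = e.

Definition corner_projection (R : pzRingType) (star : R -> R) (e p : R) : Prop :=
  in_corner e p /\ is_projection star p.

Definition strongly_star_clean_corner (R : pzRingType) (star : R -> R) (e x : R) : Prop :=
  exists u p, [/\ corner_unit e u, corner_projection star e p, u * p = p * u & x = u + p].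

Definition is_unit (R : pzRingType) (u : R) : Prop :=
  exists v, u * v = 1 /\ v * u = 1.

Definition strongly_star_clean (R : pzRingType) (star : R -> R) (x : R) : Prop :=
  exists u p, [/\ is_unit u, is_projection star p, u * p = p * u & x = u + p].

(* Main.v *)
Require Import Defs.
From mathcomp Require Import all_boot all_algebra.
Local Open Scope ring_scope.
Import GRing.Theory.

Lemma corner_l {R : pzRingType} {e x : R} : e * e = e -> in_corner e x -> e * x = x.
Proof. by move=> ee [r ->]; rewrite !mulrA ee. Qed.
Lemma corner_r {R : pzRingType} {e x : R} : e * e = e -> in_corner e x -> x * e = x.
Proof. by move=> ee [r ->]; rewrite -!mulrA ee. Qed.

Theorem proposition4p13 (R : pzRingType) (star : R -> R) (e a : R) :
  is_involution star ->
  is_projection star e ->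
  in_corner e a ->
  strongly_star_clean_corner star e a ->
  strongly_star_clean star a.
Proof.
move=> [sD sM sK] [ee se] _ [u [p [[cu [v [cv [uv vu]]]] [cp [pp sp]] up ->]]].
have eu := corner_l (R:=R) ee cu; have ue := corner_r ee cu.
have ev := corner_l (R:=R) ee cv; have ve := corner_r ee cv.
have ep := corner_l (R:=R) ee cp; have pe := corner_r ee cp.
have s0 : star 0 = 0.
  by apply: (addrI (star 0)); rewrite -sD !addr0.
have sN : forall x, star (- x) = - star x.
  move=> x; apply: (addrI (star x)); by rewrite -sD !subrr s0.
have s1 : star 1 = 1.
  have h := sM (star 1) 1. rewrite sK mulr1 sK in h; by rewrite -h.
have ue' : u * (1 - e) = 0 by rewrite mulrBr mulr1 ue subrr.
have eu' : (1 - e) * u = 0 by rewrite mulrBl mul1r eu subrr.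
have ve' : v * (1 - e) = 0 by rewrite mulrBr mulr1 ve subrr.
have ev' : (1 - e) * v = 0 by rewrite mulrBl mul1r ev subrr.
have pe' : p * (1 - e) = 0 by rewrite mulrBr mulr1 pe subrr.
have ep' : (1 - e) * p = 0 by rewrite mulrBl mul1r ep subrr.
have ee' : (1 - e) * (1 - e) = 1 - e.
  by rewrite mulrBr mulr1 mulrBl mul1r ee subrr subr0.
have ef : e + (1 - e) = 1 by rewrite addrC subrK.
have sf : star (1 - e) = 1 - e by rewrite sD sN s1 -se.
set f := 1 - e in ue' eu' ve' ev' pe' ep' ee' ef sf *; clearbody f.
exists (u - f), (p + f); split.
- exists (v - f); split.
  + by rewrite mulrBr !mulrBl uv ue' ev' ee' subr0 sub0r opprK.
  + by rewrite mulrBr !mulrBl vu ve' eu' ee' subr0 sub0r opprK.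
- split.
  + by rewrite mulrDr !mulrDl pp pe' ep' ee' add0r addr0.
  + by rewrite sD sf -sp.
- by rewrite mulrBl mulrBr !mulrDl !mulrDr up ue' ep' pe' eu' ee'.
- by rewrite addrA addrAC subrK.
Qed.
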